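(* Let $n\in\mathbb{N}$ and $m\geq 3$. Then \[ \sigma'_m(n) =\frac{1}{(n-1)!} \sum_{k=1}^{n} (-1)^{k-1} (k-1)!\cdot B_{n,k} \big(1!\cdot p'_{m}(1),\ 2!\cdot p'_m(2),\ \dots,\ (n-k+1)!\cdot p'_m(n-k+1)\big). \]
   Context: The partial exponential Bell polynomials are $B_{n,k}(x_1,\dots,x_{n-k+1})=\sum \frac{n!}{j_1!\cdots j_{n-k+1}!}\prod_{i=1}^{n-k+1}\big(\frac{x_i}{i!}\big)^{j_i}$, the sum over all tuples of nonnegative integers $(j_1,\dots,j_{n-k+1})$ with $\sum_i j_i=k$ and $\sum_i i\,j_i=n$. For $m\ge3$ and $n\in\mathbb{N}$, $\sigma'_m(n)$ is the sum of the positive divisors $d$ of $n$ with $d\equiv 0$, $1$ or $m-1 \pmod m$. $p'_m(n)$ is the number of partitions of $n$ in which every part is congruent to $0$, $1$ or $m-1$ modulo $m$. *)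

(* Defs.v *)
From mathcomp Require Import all_boot all_order all_algebra.
Set Implicit Arguments. Unset Strict Implicit. Unset Printing Implicit Defensive.
Import Order.TTheory GRing.Theory Num.Theory.

Definition good_res (m d : nat) : bool :=
  [|| d %% m == 0, d %% m == 1 | d %% m == (m - 1) %% m].

Definition sigma' (m n : nat) : nat :=
  \sum_(d <- divisors n | good_res m d) d.

(* A partition of n is represented by its multiplicity function:
   f i = number of parts equal to i.+1 (parts are in 1..n, each with
   multiplicity at most n). *)
Definition is_partition_mult (n : nat) (f : {ffun 'I_n -> 'I_n.+1}) : bool :=
  \sum_(i < n) i.+1 * f i == n.

Definition p' (m n : nat) : nat :=
  #|[set f : {ffun 'I_n -> 'I_n.+1} | is_partition_mult f &&
       [forall i : 'I_n, (f i != 0 :> nat) ==> good_res m i.+1]]|.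

(* Partial exponential Bell polynomial B_{n,k}(x_1,...,x_{n-k+1}),
   where x i.+1 is the variable x_{i+1}. The tuple (j_1,...,j_{n-k+1})
   is f : 'I_(n-k+1) -> 'I_k.+1 (each j_i <= k since sum j_i = k). *)
Definition bellB (n k : nat) (x : nat -> rat) : rat :=
  \sum_(f : {ffun 'I_(n - k + 1) -> 'I_k.+1} |
         (\sum_(i < n - k + 1) (f i : nat) == k) &&
         (\sum_(i < n - k + 1) i.+1 * f i == n))
    ((n`!)%:R / (\prod_(i < n - k + 1) ((f i)`!)%:R) *
     \prod_(i < n - k + 1) (x i.+1 / (i.+1)`!%:R) ^+ f i)%R.

(* Main.v *)
Require Import Defs.
From mathcomp Require Import all_boot all_order all_algebra.
From mathcomp Require Import zify ring.
Import Order.TTheory GRing.Theory Num.Theory.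
Set Implicit Arguments. Unset Strict Implicit.
Local Open Scope ring_scope.

Record eqm (K : nat) (p q : {poly rat}) : Prop :=
  EqM { eqmP : forall i, (i < K)%N -> p`_i = q`_i }.

Lemma eqm_refl K p : eqm K p p. Proof. by constructor. Qed.
Lemma eqm_sym K p q : eqm K p q -> eqm K q p.
Proof. by case=> h; constructor=> i /h ->. Qed.
Lemma eqm_trans K p q r : eqm K p q -> eqm K q r -> eqm K p r.
Proof. by case=> h1 [h2]; constructor=> i hi; rewrite h1 // h2. Qed.
Lemma eqm_le K K' p q : (K' <= K)%N -> eqm K p q -> eqm K' p q.
Proof. by move=> hK [h]; constructor=> i hi; apply: h; apply: leq_trans hK. Qed.
Lemma eqmD K p1 p2 q1 q2 : eqm K p1 q1 -> eqm K p2 q2 -> eqm K (p1 + p2) (q1 + q2).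
Proof. by case=> h1 [h2]; constructor=> i hi; rewrite !coefD h1 ?h2. Qed.
Lemma eqmM K p1 p2 q1 q2 : eqm K p1 q1 -> eqm K p2 q2 -> eqm K (p1 * p2) (q1 * q2).
Proof.
case=> h1 [h2]; constructor=> i hi; rewrite !coefM; apply: eq_bigr => j _.
have hj := ltn_ord j; rewrite h1 ?h2 //; lia.
Qed.
Lemma eqm_prod K (I : Type) (r : seq I) (P : pred I) (F G : I -> {poly rat}) :
  (forall i, P i -> eqm K (F i) (G i)) ->
  eqm K (\prod_(i <- r | P i) F i) (\prod_(i <- r | P i) G i).
Proof. by move=> h; apply: (big_ind2 (eqm K)); [exact: eqm_refl|move=> *; exact: eqmM|exact: h]. Qed.
Lemma eqmX K p q k : eqm K p q -> eqm K (p ^+ k) (q ^+ k).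
Proof. by move=> h; elim: k => [|k IH]; rewrite ?expr0 ?eqm_refl // !exprS; apply: eqmM. Qed.
Lemma eqm_shift K k p q : eqm K p q -> eqm (K + k) ('X^k * p) ('X^k * q).
Proof.
case=> h; constructor=> i hi; rewrite !coefXnM; case: ifP => // /negbT; rewrite -leqNgt => hk.
apply: h; lia.
Qed.
Lemma eqm_high K k p w : (K <= k)%N -> eqm K (p + 'X^k * w) p.
Proof. move=> hk; constructor=> i hi; rewrite coefD coefXnM ifT ?addr0 //; lia. Qed.
Lemma eqm_eq K p q : p = q -> eqm K p q. Proof. by move=> ->; apply: eqm_refl. Qed.

Lemma eqm_cancel K (A B P : {poly rat}) : P`_0 = 1 -> eqm K (A * P) (B * P) -> eqm K A B.
Proof.
move=> P0 [h]; constructor; elim/ltn_ind => i IH hi.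
have := h i hi; rewrite !coefM !big_ord_recr /= subnn P0 !mulr1 => e.
apply: (addrI (\sum_(j < i) B`_j * P`_(i - j))); rewrite -e; congr (_ + _).
apply: eq_bigr => j _; rewrite IH //; have := ltn_ord j; lia.
Qed.

Lemma prod_monom (R : comNzRingType) (I : Type) (r : seq I) (a : I -> R) (e : I -> nat) :
  \prod_(i <- r) (a i *: 'X^(e i)) = (\prod_(i <- r) a i) *: 'X^(\sum_(i <- r) e i).
Proof.
elim: r => [|x r IH]; first by rewrite !big_nil scale1r expr0.
rewrite !big_cons IH exprD -scalerAl -scalerAr scalerA //.
Qed.

Lemma sum_split (V : nmodType) (f : nat -> V) a b : (a <= b)%N ->
  \sum_(j < b) f j = \sum_(j < a) f j + \sum_(a <= j < b) f j.
Proof. by move=> h; rewrite -(big_mkord xpredT f) -(big_mkord xpredT f) (@big_cat_nat _ _ _ a 0 b). Qed.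
Lemma prod_split (f : nat -> {poly rat}) a b : (a <= b)%N ->
  \prod_(j < b) f j = \prod_(j < a) f j * \prod_(a <= j < b) f j.
Proof. by move=> h; rewrite -(big_mkord xpredT f) -(big_mkord xpredT f) (@big_cat_nat _ _ _ a 0 b). Qed.

Lemma eqm_highsum K (I : Type) (r : seq I) (P : pred I) (c : I -> rat) (e : I -> nat) p :
  (forall j, P j -> (K <= e j)%N) ->
  eqm K (p + \sum_(j <- r | P j) c j *: 'X^(e j)) p.
Proof.
move=> h; rewrite (_ : \sum_(j <- r | P j) c j *: 'X^(e j) =
   'X^K * \sum_(j <- r | P j) c j *: 'X^(e j - K)); first exact: eqm_high.
rewrite mulr_sumr; apply: eq_bigr => j Pj; rewrite -scalerAr -exprD subnKC //; exact: h.
Qed.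

Definition G (m t i : nat) : {poly rat} :=
  \sum_(j < t.+1) (((j : nat) == 0%N) || good_res m i.+1)%:R *: 'X^(i.+1 * j).
Definition F (m t : nat) := \prod_(i < t) G m t i.

Lemma prod_bool (I : finType) (b : I -> bool) :
  \prod_(i : I) ((b i)%:R : rat) = ([forall i, b i])%:R.
Proof.
case: forallP => [h|/forallP/forallPn [i /negbTE hi]].
  by rewrite big1 // => i _; rewrite h.
by rewrite (bigD1 i) //= hi mul0r.
Qed.

Lemma pA m t : ((p' m t)%:R : rat) = (F m t)`_t.
Proof.
rewrite /F /G bigA_distr_bigA /= coef_sum /p' -sum1_card natr_sum big_mkcond /=.
apply: eq_bigr => f _; rewrite prod_monom coefZ coefXn prod_bool -natrM mulnb inE.
rewrite andbC /is_partition_mult eq_sym.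
rewrite (eq_forallb (fun i => implyNb _ _)).
by case: (_ && _).
Qed.

Lemma G_low m t N i : (t <= N)%N -> eqm t.+1 (G m t i) (G m N i).
Proof.
move=> h; rewrite /G (@sum_split _ (fun j : nat => ((j == 0%N) || good_res m i.+1)%:R *: 'X^(i.+1 * j)) t.+1 N.+1) //.
apply: eqm_sym; rewrite big_nat_cond.
apply: eqm_highsum => j /andP [/andP [hj _] _]; nia.
Qed.

Lemma G_high m N i t : (t <= i)%N -> eqm t.+1 (G m N i) 1.
Proof.
move=> h; rewrite /G big_ord_recl /= muln0 expr0 scale1r.
apply: eqm_highsum => j _ /=; rewrite /bump /=; nia.
Qed.

Lemma F_low m t N : (t <= N)%N -> eqm t.+1 (F m t) (F m N).
Proof.
move=> h; rewrite /F (@prod_split _ t N h) -[X in eqm _ X _]mulr1; apply: eqmM.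
  by apply: eqm_prod => i _; apply: G_low.
apply: eqm_sym; rewrite big_nat_cond; apply: (big_ind (fun x => eqm t.+1 x 1)) => //.
  by move=> x y hx hy; rewrite -[1]mulr1; apply: eqmM.
by move=> i /andP [/andP [hi _] _]; apply: G_high.
Qed.

Definition D (p : {poly rat}) := 'X * p^`().

Lemma deriv1P : (1 : {poly rat})^`() = 0.
Proof. by rewrite -polyC1 derivC. Qed.

Lemma D_prod K (g h : nat -> {poly rat}) r :
  (forall i, (i < r)%N -> eqm K (D (g i)) (g i * h i)) ->
  eqm K (D (\prod_(i < r) g i)) (\prod_(i < r) g i * \sum_(i < r) h i).
Proof.
elim: r => [|r IH] hr.
  by rewrite !big_ord0 /D deriv1P mulr0 mul1r.
rewrite !big_ord_recr /=.
set A := \prod_(i < r) g i; set SA := \sum_(i < r) h i.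
have -> : D (A * g r) = D A * g r + A * D (g r) by rewrite /D derivM; ring.
have h1 : eqm K (D A) (A * SA) by apply: IH => i hi; apply: hr; apply: ltnW.
have h2 : eqm K (D (g r)) (g r * h r) by apply: hr.
apply: eqm_trans; first exact: (eqmD (eqmM h1 (eqm_refl K (g r))) (eqmM (eqm_refl K A) h2)).
by apply: eqm_eq; ring.
Qed.

Lemma factor_key (d N : nat) : (0 < d)%N ->
  eqm N.+1 (D (\sum_(j < N.+1) 'X^d ^+ j))
    ((\sum_(j < N.+1) 'X^d ^+ j) * (d%:R * ((\sum_(j < N.+1) 'X^d ^+ j) - 1))).
Proof.
move=> hd.
set y : {poly rat} := 'X^d; set g := \sum_(j < N.+1) y ^+ j.
have E1 : (1 - y) * g = 1 - y ^+ N.+1.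
  have := subrXX 1 y N.+1; rewrite expr1n => ->; congr (_ * _).
  by apply: eq_bigr => j _; rewrite expr1n mul1r.
have hv : 'X * y^`() - d%:R * y = 0.
  case: d hd @y {g E1} => // d _ y; rewrite /y derivXn /= -mulr_natr mulrA -exprS mulrC.
  by rewrite subrr.
have hw : 'X * (- y^`() * g + (1 - y) * g^`()) + 'X * (y^`() * y ^+ N * N.+1%:R) = 0.
  have := congr1 (fun p => 'X * p^`()) E1; rewrite /= derivM derivB deriv1P derivB deriv1P.
  rewrite [(y ^+ _)^`()]deriv_exp /= -mulr_natr => e.
  rewrite -(subrr ('X * (0 - y^`() * y ^+ N * N.+1%:R))) -{1}e; ring.
have hz : (1 - y) * g - (1 - y * y ^+ N) = 0 by rewrite E1 exprS subrr.
have hT : 'X * g^`() - d%:R * g * (g - 1) - y * y ^+ N * (d%:R * g - d%:R * N.+1%:R * g + 'X * g^`()) = 0.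
  have -> : 'X * g^`() - d%:R * g * (g - 1) - y * y ^+ N * (d%:R * g - d%:R * N.+1%:R * g + 'X * g^`()) =
    g * ('X * (- y^`() * g + (1 - y) * g^`()) + 'X * (y^`() * y ^+ N * N.+1%:R))
    + g * (g - y ^+ N * N.+1%:R) * ('X * y^`() - d%:R * y)
    - ('X * g^`() + d%:R * g) * ((1 - y) * g - (1 - y * y ^+ N)) by ring.
  rewrite hw hv hz; ring.
have ey : y * y ^+ N = 'X^(N.+1) * 'X^((d - 1) * N.+1).
  by rewrite -exprS /y -exprM -exprD; congr (_ ^+ _); nia.
have -> : D g = g * (d%:R * (g - 1)) + 'X^(N.+1) * ('X^((d - 1) * N.+1) * (d%:R * g - d%:R * N.+1%:R * g + 'X * g^`())).
  rewrite (mulrA 'X^(N.+1)) -ey /D; apply/eqP; rewrite -subr_eq0; apply/eqP; rewrite -hT; ring.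
exact: eqm_high.
Qed.

Lemma G_good m N i : good_res m i.+1 -> G m N i = \sum_(j < N.+1) 'X^(i.+1) ^+ j.
Proof. by move=> h; rewrite /G; apply: eq_bigr => j _; rewrite h orbT scale1r exprM. Qed.

Lemma G_sub1 m N i : G m N i - 1 = \sum_(j < N) (good_res m i.+1)%:R *: 'X^(i.+1 * j.+1).
Proof. by rewrite /G big_ord_recl /= muln0 expr0 scale1r addrC addKr. Qed.

Lemma G_bad m N i : ~~ good_res m i.+1 -> G m N i = 1.
Proof.
move=> h; apply/eqP; rewrite -subr_eq0 G_sub1 (negbTE h); apply/eqP.
by apply: big1 => j _; rewrite scale0r.
Qed.

Definition H m N i : {poly rat} := (i.+1)%:R * (G m N i - 1).

Lemma DP_eq m N : eqm N.+1 (D (F m N)) (F m N * \sum_(i < N) H m N i).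
Proof.
apply: D_prod => i _; case: (boolP (good_res m i.+1)) => h.
  by rewrite /H G_good //; exact: factor_key.
by rewrite /H G_bad // subrr !mulr0 /D deriv1P mulr0; exact: eqm_refl.
Qed.

Section NatPart.
Local Open Scope nat_scope.
Lemma count_dvd a N : (0 < a)%N -> (0 < N)%N ->
  \sum_(j < N) (N == a * j.+1 : nat) = (a %| N) :> nat.
Proof.
move=> ha hN; case: (boolP (a %| N)) => h.
  have [s hs] := dvdnP h.
  have s0 : (0 < s)%N by move: hN; rewrite hs; case: s {hs} => //.
  have sN : (s.-1 < N)%N by rewrite hs; nia.
  rewrite (bigD1 (Ordinal sN)) //= big1 /=.
    by rewrite prednK // hs mulnC eqxx.
  move=> j hj; case: eqP => // e; exfalso.
  move/eqP: hj; apply; apply: val_inj => /=.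
  have : a * s = a * j.+1 by rewrite -e hs mulnC.
  by move/eqP; rewrite eqn_pmul2l // => /eqP ->.
apply: big1 => j _; case: eqP => // e; exfalso.
by move/negP: h; apply; rewrite e dvdn_mulr.
Qed.

Lemma sigma_sum m N : (0 < N)%N ->
  (sigma' m N = \sum_(i < N) i.+1 * (good_res m i.+1 && (i.+1 %| N)))%N.
Proof.
move=> hN; rewrite /sigma'.
have pe : perm_eq (divisors N) [seq d <- index_iota 1 N.+1 | d %| N].
  apply: uniq_perm; first exact: divisors_uniq.
    by apply: filter_uniq; apply: iota_uniq.
  move=> d; rewrite mem_filter mem_index_iota -dvdn_divisors //.
  case: (boolP (d %| N)) => //= h.
  have d0 : 0 < d by case: d h => // h; rewrite dvd0n in h; move/eqP: h hN => ->.
  by rewrite d0 ltnS (dvdn_leq hN h).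
rewrite (perm_big _ pe) /= big_filter_cond big_add1 /= big_mkord big_mkcond /=.
apply: eq_bigr => i _; rewrite andbC.
by case: (_ && _); rewrite ?muln1 ?muln0.
Qed.

End NatPart.

Lemma S_coef m N : (0 < N)%N -> (\sum_(i < N) H m N i)`_N = (sigma' m N)%:R.
Proof.
move=> hN; rewrite sigma_sum // natr_sum coef_sum; apply: eq_bigr => i _.
rewrite /H mulr_natl coefMn G_sub1 coef_sum.
rewrite (eq_bigr (fun j : 'I_N => (good_res m i.+1)%:R * ((N == i.+1 * j.+1)%N : nat)%:R)); last first.
  by move=> j _; rewrite coefZ coefXn.
rewrite -mulr_sumr -natr_sum count_dvd //.
by case: (good_res m i.+1); case: (i.+1 %| N)%N; rewrite ?mul1r ?mul0r ?muln1 ?muln0 ?mul0rn.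
Qed.


Lemma fact_neq0 n : ((n`!)%:R : rat) != 0.
Proof. by rewrite pnatr_eq0 -lt0n fact_gt0. Qed.

Lemma binq j l : (l <= j)%N ->
  ((l`!%:R)^-1 * ((j - l)`!%:R)^-1 : rat) = (j`!%:R)^-1 * ('C(j, l))%:R.
Proof.
move=> hl; rewrite -(bin_fact hl) !natrM.
have h1 := fact_neq0 l; have h2 := fact_neq0 (j - l).
have h3 : ('C(j, l)%:R : rat) != 0 by rewrite pnatr_eq0 -lt0n bin_gt0.
by field; rewrite h1 h2 h3.
Qed.

Definition E (k : nat) (a : {poly rat}) : {poly {poly rat}} :=
  \poly_(j < k.+1) (((j`!%:R)^-1 : rat) *: a ^+ j).

Lemma claim1 k (c : nat -> {poly rat}) M j : (j <= k)%N ->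
  (\prod_(i < M) E k (c i))`_j = ((j`!%:R)^-1 : rat) *: (\sum_(i < M) c i) ^+ j.
Proof.
elim: M j => [|M IH] j hj.
  rewrite !big_ord0 coef1; case: j hj => [|j] _.
    by rewrite expr0 /= invr1 scale1r.
  by rewrite expr0n scaler0.
rewrite !big_ord_recr /= coefM addrC exprDn scaler_sumr.
apply: eq_bigr => l _; have hl : (l <= j)%N by have := ltn_ord l; lia.
rewrite IH; last by lia.
rewrite /E coef_poly ifT; last by lia.
rewrite -scalerAl -scalerAr scalerA -scaler_nat scalerA binq // mulrC.
by rewrite [_ ^+ (j - l) * _]mulrC.
Qed.

Lemma claim2 k (c : nat -> {poly rat}) M :
  (\prod_(i < M) E k (c i))`_k =
  \sum_(f : {ffun 'I_M -> 'I_k.+1} | (\sum_(i < M) (f i : nat))%N == k)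
     \prod_(i < M) (((f i)`!%:R)^-1 *: c i ^+ f i).
Proof.
rewrite /E (eq_bigr (fun i : 'I_M => \sum_(j < k.+1) ((((j`!%:R)^-1 : rat) *: c i ^+ j) *: 'X^j))); last first.
  by move=> i _; rewrite poly_def.
rewrite bigA_distr_bigA /= coef_sum [RHS]big_mkcond /=; apply: eq_bigr => f _.
rewrite prod_monom coefZ coefXn eq_sym; case: eqP => _; by rewrite ?mulr1 ?mulr0.
Qed.

Lemma multinom (M k : nat) (c : nat -> {poly rat}) :
  ((k`!%:R)^-1 : rat) *: (\sum_(i < M) c i) ^+ k =
  \sum_(f : {ffun 'I_M -> 'I_k.+1} | (\sum_(i < M) (f i : nat))%N == k)
     \prod_(i < M) (((f i)`!%:R)^-1 *: c i ^+ f i).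
Proof. by rewrite -claim2 claim1. Qed.


Lemma decX (Q : {poly rat}) : Q`_0 = 0 -> Q = 'X * drop_poly 1 Q.
Proof.
move=> h; have e : take_poly 1 Q = 0.
  by apply/polyP => i; rewrite coef_take_poly coef0; case: i => //.
by rewrite -{1}(poly_take_drop 1 Q) e add0r expr1 mulrC.
Qed.

Lemma trunc M k (Q1 Q2 : {poly rat}) : Q1`_0 = 0 -> Q2`_0 = 0 ->
  eqm M.+1 Q1 Q2 -> eqm (M + k) (Q1 ^+ k) (Q2 ^+ k).
Proof.
move=> h1 h2 [h]; rewrite (decX h1) (decX h2) !exprMn.
apply: eqm_shift; apply: eqmX; constructor => i hi; rewrite !coef_drop_poly.
apply: h; lia.
Qed.

Lemma Fcoef m n t : (t <= n)%N -> (F m n)`_t = (p' m t)%:R.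
Proof. by move=> ht; rewrite pA (eqmP (F_low m ht) (ltnSn t)). Qed.

Lemma F0 m n : (F m n)`_0 = 1.
Proof. by rewrite -(eqmP (F_low m (leq0n n)) (ltnSn 0)) /F big_ord0 coef1. Qed.

Lemma bell_eq n m k : (1 <= k <= n)%N ->
  bellB n k (fun i => (i`! * p' m i)%:R) =
  n`!%:R * (((k`!%:R)^-1 : rat) *: (F m n - 1) ^+ k)`_n.
Proof.
move=> /andP [hk1 hkn].
set M := (n - k + 1)%N.
set b := fun i => ((p' m i)%:R : rat).
set QM := \sum_(i < M) (b i.+1 *: 'X^(i.+1)).
have QMe : QM = 'X * \poly_(i < M) b i.+1.
  by rewrite poly_def mulr_sumr; apply: eq_bigr => i _; rewrite -scalerAr -exprS.
have tr : eqm (M + k) ((F m n - 1) ^+ k) (QM ^+ k).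
  apply: trunc.
  - by rewrite coefB F0 coef1 subrr.
  - by rewrite QMe coefXM.
  constructor => i hi; rewrite QMe coefXM coefB coef1 coef_poly.
  case: i hi => [|i] hi; first by rewrite F0 subrr.
  rewrite /= ifT; last by lia.
  by rewrite Fcoef ?subr0 //; lia.
have hMk : (n < M + k)%N by rewrite /M; lia.
rewrite coefZ (eqmP tr hMk).
rewrite -coefZ /QM (multinom M k (fun i => b i.+1 *: 'X^(i.+1))) coef_sum mulr_sumr /bellB big_mkcondr /=.
apply: eq_bigr => f _.
rewrite (eq_bigr (fun i : 'I_M => ((((f i)`!%:R)^-1 * b i.+1 ^+ f i) *: 'X^(i.+1 * f i)))); last first.
  by move=> i _; rewrite exprZn -exprM scalerA mulnC.
rewrite prod_monom coefZ coefXn eq_sym.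
case: eqP => _; last by rewrite !mulr0.
rewrite mulr1 big_split /= prodfV mulrA; congr (_ * _).
by apply: eq_bigr => i _; rewrite natrM mulrAC divff ?fact_neq0 // mul1r.
Qed.

Local Close Scope ring_scope.
Unset Implicit Arguments.

Theorem corollary3p2 (n m : nat) : 0 < n -> 3 <= m ->
  ((sigma' m n)%:R : rat) =
  (1 / ((n - 1)`!)%:R *
   \sum_(1 <= k < n.+1)
     (-1) ^+ (k - 1) * ((k - 1)`!)%:R *
     bellB n k (fun i => (i`! * p' m i)%:R))%R.
Proof.
Local Open Scope ring_scope.
move=> hn _.
set P := F m n.
set Q := P - 1.
set L := \sum_(1 <= k < n.+1) (((-1) ^+ (k - 1) / k%:R : rat) *: Q ^+ k).
rewrite [RHS](_ : _ = n%:R * L`_n); last first.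
  rewrite /L coef_sum !mulr_sumr; apply: eq_big_nat => k /andP [hk1 hk2].
  rewrite bell_eq; last by rewrite hk1 -ltnS.
  rewrite !coefZ.
  have fn : (n`! = n * (n - 1)`!)%N by case: (n) hn => // n' _; rewrite factS subn1.
  have fk : (k`! = k * (k - 1)`!)%N by case: (k) hk1 => // k' _; rewrite factS subn1.
  rewrite fn fk !natrM.
  have h1 := fact_neq0 (n - 1); have h2 := fact_neq0 (k - 1).
  have h3 : (n%:R : rat) != 0 by rewrite pnatr_eq0 -lt0n.
  have h4 : (k%:R : rat) != 0 by rewrite pnatr_eq0 -lt0n.
  by field; rewrite h1 h2 h4.
have Q0 : Q`_0 = 0 by rewrite coefB F0 coef1 subrr.
have DQ : D Q = D P by rewrite /D derivB deriv1P subr0.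
have DL : D L = (\sum_(i < n) (-Q) ^+ i) * D Q.
  rewrite /L /D raddf_sum mulr_sumr big_add1 /= big_mkord mulr_suml; apply: eq_bigr => i _.
  rewrite derivZ deriv_exp /= subn1 /= [(- Q) ^+ _]exprNn.
  rewrite -scaler_nat scalerA divfK ?pnatr_eq0 // -scalerAr.
  rewrite -mul_polyC rmorphXn rmorphN rmorph1; ring.
have geo : (1 + Q) * \sum_(i < n) (-Q) ^+ i = 1 - (-Q) ^+ n.
  have := subrXX 1 (-Q) n; rewrite expr1n opprK => ->; congr (_ * _).
  by apply: eq_bigr => i _; rewrite expr1n mul1r.
have PQ : P = 1 + Q by rewrite /Q addrC subrK.
have hA := decX Q0; set A1 := drop_poly 1 Q in hA *.
have key : D L * P = D P + 'X^(n.+1) * (- (P^`() * (-1) ^+ n * A1 ^+ n)).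
  rewrite [in LHS]PQ DL DQ.
  have -> : (\sum_(i < n) (-Q) ^+ i) * D P * (1 + Q) = D P * ((1 + Q) * \sum_(i < n) (-Q) ^+ i) by ring.
  rewrite geo [(- Q) ^+ _]exprNn hA exprMn /D exprS; ring.
have h1 : eqm n.+1 (D L * P) (D P) by rewrite key; exact: eqm_high.
have h2 := DP_eq m n.
have h3 : eqm n.+1 (D L * P) ((\sum_(i < n) H m n i) * P).
  by apply: (eqm_trans h1); rewrite mulrC; exact: h2.
have h4 := eqm_cancel (F0 m n) h3.
have := eqmP h4 (ltnSn n); rewrite S_coef // /D coefXM.
rewrite ifN; last by rewrite -lt0n.
by rewrite coef_deriv prednK // mulr_natl => ->.
Qed.
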